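(* For all Borel probability measures $\mu,\nu$ on $\mathbb{R}$, $$d_{Ku}(\mu,\nu)=\max\{|\mu(I)-\nu(I)| : I\in\mathcal{I}_0\},$$ i.e. the maximum is attained.
   Context: $\mathcal{I}_0$ denotes the set of all non-empty connected subsets of $\mathbb{R}$ (intervals, possibly degenerate single points, possibly unbounded). With $f_\mu(t)=\mu((-\infty,t])$, the Kuiper distance is $d_{Ku}(\mu,\nu)=\sup_{t}(f_\mu(t)-f_\nu(t))+\sup_t(f_\nu(t)-f_\mu(t))$, which equals $\sup\{|\mu(I)-\nu(I)|: I \text{ a non-degenerate interval of }\mathbb{R}\}$. *)

(* Defs.v *)
From HB Require Import structures.
From mathcomp Require Import all_boot all_order all_algebra.
From mathcomp Require Import all_classical all_reals all_analysis.
Set Implicit Arguments. Unset Strict Implicit. Unset Printing Implicit Defensive.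
Import Order.TTheory GRing.Theory Num.Theory numFieldNormedType.Exports.
Local Open Scope classical_set_scope.
Local Open Scope ring_scope.

Definition cdf (R : realType) (mu : probability R R) (t : R) : R :=
  fine (mu [set` `]-oo, t]]).

Definition kuiper_dist (R : realType) (mu nu : probability R R) : R :=
  sup (range (fun t => cdf mu t - cdf nu t))
  + sup (range (fun t => cdf nu t - cdf mu t)).

Definition I0 (R : realType) (I : set R) : Prop := I !=set0 /\ connected I.

(* Main.v *)
Require Import Defs.
From HB Require Import structures.
From mathcomp Require Import all_boot all_order all_algebra.
From mathcomp Require Import all_classical all_reals all_analysis.
From mathcomp Require Import lra.
Import Order.TTheory GRing.Theory Num.Theory.
Local Open Scope classical_set_scope.
Local Open Scope ring_scope.

Definition idRR (R : realType) : R -> R := idfun.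
HB.instance Definition _ (R : realType) :=
  @isMeasurableFun.Build _ _ _ _ (idRR R) (@measurable_id _ _ setT).

Section facts.
Context {R : realType} (mu : probability R R).

Let idX : {RV mu >-> R} := idRR R.

Lemma cdfE t : random_variable.cdf idX t = mu [set` `]-oo, t]].
Proof. by []. Qed.

Lemma finmu (A : set R) : measurable A -> (fine (mu A))%:E = mu A.
Proof. by move=> mA; rewrite fineK // fin_num_measure. Qed.

Lemma fmu_ge0 (A : set R) : 0 <= fine (mu A).
Proof. by apply: fine_ge0. Qed.

Lemma fmu_le1 (A : set R) : measurable A -> fine (mu A) <= 1.
Proof. by move=> mA; rewrite -lee_fin finmu // probability_le1. Qed.

Lemma fmu_le (A B : set R) : measurable A -> measurable B -> A `<=` B ->
  fine (mu A) <= fine (mu B).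
Proof.
by move=> mA mB AB; rewrite -lee_fin !finmu // le_measure // inE.
Qed.

Lemma fmuT : fine (mu setT) = 1.
Proof. by rewrite probability_setT. Qed.

Lemma fmu0 : fine (mu set0) = 0.
Proof. by rewrite measure0. Qed.

Lemma G3 e : 0 < e -> exists M, 1 - e < Defs.cdf mu M.
Proof.
move=> e0.
have /fine_cvgP[_ H] := cvg_cdfy1 idX.
have /cvgrPdist_lt/(_ e e0) H2 := H.
have [M HM] := filter_ex H2.
exists M; move: HM; rewrite /Defs.cdf /= => HM.
move: HM; rewrite ltr_norml => /andP[_ h]; rewrite cdfE in h; lra.
Qed.


Lemma G4 e : 0 < e -> exists M, Defs.cdf mu M < e.
Proof.
move=> e0.
have /fine_cvgP[_ H] := cvg_cdfNy0 idX.
have /cvgrPdist_lt/(_ e e0) H2 := H.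
have [M HM] := filter_ex H2.
exists M; move: HM; rewrite /Defs.cdf /= => HM.
move: HM; rewrite ltr_norml => /andP[h _]; rewrite cdfE in h; lra.
Qed.

Lemma G5 s e : 0 < e -> exists2 u, s < u & Defs.cdf mu u < Defs.cdf mu s + e.
Proof.
move=> e0.
have H0 := @cdf_right_continuous _ _ _ mu idX s.
rewrite cdfE -finmu // in H0.
have /fine_cvgP[_ H] := H0.
have /cvgrPdist_lt/(_ e e0) H2 := H.
have H3 : \forall u \near s^'+, s < u /\
   `|fine (mu [set` `]-oo, s]]) - (fine \o random_variable.cdf idX) u| < e.
  by near=> u; split; [near: u; exact: nbhs_right_gt| near: u; exact: H2].
have [u [su Hu]] := filter_ex H3.
exists u => //; move: Hu; rewrite /Defs.cdf /= cdfE ltr_norml => /andP[h _]; lra.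
Unshelve. all: by end_near.
Qed.

Definition L (s : R) := fine (mu [set` `]-oo, s[]).

Lemma itvNyo_bigcup (s : R) : [set` `]-oo, s[] =
  \bigcup_k [set` `]-oo, s - k.+1%:R^-1]].
Proof.
apply/seteqP; split => r /=.
- rewrite in_itv /= => /ltr_add_invr[k hk]; exists k => //=.
  by rewrite in_itv /= lerBrDr ltW.
- move=> [k _] /=; rewrite !in_itv /= => h.
  by apply: (le_lt_trans h); rewrite ltrBlDr ltrDl.
Qed.

Lemma G6 s e : 0 < e -> exists2 u, u < s & L s - e < Defs.cdf mu u.
Proof.
move=> e0.
have H0 : (mu \o (fun k => [set` `]-oo, s - k.+1%:R^-1]])) @ \oo -->
    mu [set` `]-oo, s[].
  rewrite itvNyo_bigcup; apply: nondecreasing_cvg_mu => //.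
  - by apply: bigcup_measurable.
  - move=> m n mn; apply/subsetPset => x /=; rewrite !in_itv /= => h.
    apply: (le_trans h); rewrite lerD2l lerN2 lef_pV2 ?posrE // ler_nat //.
rewrite -finmu // in H0.
have /fine_cvgP[_ H] := H0.
have /cvgrPdist_lt/(_ e e0) H2 := H.
have [k Hk] := filter_ex H2.
exists (s - k.+1%:R^-1); first by rewrite ltrBlDr ltrDl.
move: Hk; rewrite /L /Defs.cdf /= ltr_norml => /andP[_ h]; lra.
Qed.

Lemma cdf_mono s t : s <= t -> Defs.cdf mu s <= Defs.cdf mu t.
Proof.
move=> st; apply: fmu_le => // x /=; rewrite !in_itv /= => h; exact: le_trans h st.
Qed.

Lemma cdf_L u s : u < s -> Defs.cdf mu u <= L s.
Proof.
move=> us; apply: fmu_le => // x /=; rewrite !in_itv /= => h; exact: le_lt_trans h us.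
Qed.

End facts.
Arguments cdf_mono {R} mu {s t}.
Arguments cdf_L {R} mu {u s}.

Section pair.
Context (R : realType) (mu nu : probability R R).

Let D t := Defs.cdf mu t - Defs.cdf nu t.
Let A := sup (range D).
Let hb (b : itv_bound R) := fine (mu [set` Interval -oo%O b]) - fine (nu [set` Interval -oo%O b]).
Let hL s := L mu s - L nu s.

Lemma cdf01 (m : probability R R) t : 0 <= Defs.cdf m t <= 1.
Proof. by rewrite fmu_ge0 fmu_le1. Qed.

Lemma hasA : has_sup (range D).
Proof.
split; first by exists (D 0), 0.
exists 1 => _ [t _ <-]; rewrite /D.
have /andP[? ?] := cdf01 mu t; have /andP[? ?] := cdf01 nu t; lra.
Qed.

Lemma D_le_A t : D t <= A.
Proof. by apply: sup_upper_bound; [exact: hasA | exists t]. Qed.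

Lemma A_adh e : 0 < e -> exists t, A - e < D t.
Proof. by move=> e0; have [_ [t _ <-] h] := sup_adherent e0 hasA; exists t. Qed.

Lemma Dpinf e : 0 < e -> exists M, forall t, M <= t -> `|D t| < e.
Proof.
move=> e0; have [M1 h1] := G3 mu _ e0; have [M2 h2] := G3 nu _ e0.
exists (Num.max M1 M2) => t; rewrite ge_max => /andP[t1 t2].
have := cdf_mono mu t1; have := cdf_mono nu t2.
have /andP[? ?] := cdf01 mu t; have /andP[? ?] := cdf01 nu t.
rewrite /D ltr_norml => ? ?; apply/andP; split; lra.
Qed.

Lemma Dninf e : 0 < e -> exists M, forall t, t <= M -> `|D t| < e.
Proof.
move=> e0; have [M1 h1] := G4 mu _ e0; have [M2 h2] := G4 nu _ e0.
exists (Num.min M1 M2) => t; rewrite le_min => /andP[t1 t2].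
have := cdf_mono mu t1; have := cdf_mono nu t2.
have /andP[? ?] := cdf01 mu t; have /andP[? ?] := cdf01 nu t.
rewrite /D ltr_norml => ? ?; apply/andP; split; lra.
Qed.

Lemma Dright s e : 0 < e -> exists2 eta, 0 < eta &
  forall u, s <= u -> u < s + eta -> `|D u - D s| < e.
Proof.
move=> e0; have [u1 su1 h1] := G5 mu s _ e0; have [u2 su2 h2] := G5 nu s _ e0.
exists (Num.min u1 u2 - s); first by rewrite subr_gt0 lt_min su1.
move=> u su; rewrite addrC subrK lt_min => /andP[/ltW uu1 /ltW uu2].
have := cdf_mono mu su; have := cdf_mono nu su.
have := cdf_mono mu uu1; have := cdf_mono nu uu2.
rewrite /D ltr_norml => ? ? ? ?; apply/andP; split; lra.
Qed.

Lemma Dleft s e : 0 < e -> exists2 eta, 0 < eta &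
  forall u, s - eta < u -> u < s -> `|D u - hL s| < e.
Proof.
move=> e0; have [u1 su1 h1] := G6 mu s _ e0; have [u2 su2 h2] := G6 nu s _ e0.
exists (s - Num.max u1 u2); first by rewrite subr_gt0 gt_max su1.
move=> u; rewrite opprB addrC subrK gt_max => /andP[/ltW uu1 /ltW uu2] us.
have := cdf_L mu us; have := cdf_L nu us.
have := cdf_mono mu uu1; have := cdf_mono nu uu2.
rewrite /D /hL ltr_norml => ? ? ? ?; apply/andP; split; lra.
Qed.

Lemma A_ge0 : 0 <= A.
Proof.
rewrite leNgt; apply/negP => A0.
have nA : 0 < - A by rewrite oppr_gt0.
have [M hM] := Dninf _ nA.
have := hM M (lexx M); have := D_le_A M; rewrite ltr_norml => ? /andP[? ?]; lra.
Qed.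

Lemma hL_le s : hL s <= A.
Proof.
rewrite leNgt; apply/negP => hA.
have e0 : 0 < hL s - A by rewrite subr_gt0.
have [eta eta0 h] := Dleft s _ e0.
have := h (s - eta / 2); have := D_le_A (s - eta / 2).
rewrite ltr_norml => ? H; have /andP[? ?] : (- (hL s - A) < D (s - eta / 2) - hL s < hL s - A).
  by apply: H; lra.
lra.
Qed.

Lemma hbNy : hb -oo%O = 0.
Proof. by rewrite /hb set_itv_bndNy !fmu0 subrr. Qed.

Lemma hbyy : hb +oo%O = 0.
Proof. by rewrite /hb set_itvNyy !fmuT subrr. Qed.

Lemma hb_le b : hb b <= A.
Proof.
case: b => [[] s|[]].
- exact: hL_le.
- exact: D_le_A.
- by rewrite hbNy A_ge0.
- by rewrite hbyy A_ge0.
Qed.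

Lemma hb_attain : exists b, hb b = A.
Proof.
pose P := [set t | exists2 e, 0 < e & forall u, u < t -> D u <= A - e].
have [Pne|P0] := pselect (P !=set0); last first.
  exists -oo%O; rewrite hbNy; apply/eqP; rewrite eq_le A_ge0 /= leNgt.
  apply/negP => A0.
  have e0 : 0 < A / 2 by lra.
  have [M hM] := Dninf _ e0; apply: P0; exists M, (A / 2) => // u uM.
  by have := hM u (ltW uM); rewrite ltr_norml => /andP[? ?]; lra.
have [Pub|Pnub] := pselect (has_ubound P); last first.
  exists +oo%O; rewrite hbyy; apply/eqP; rewrite eq_le A_ge0 /= leNgt.
  apply/negP => A0.
  have e0 : 0 < A / 2 by lra.
  have [M hM] := Dpinf _ e0.
  have [t Pt Mt] : exists2 t, P t & M < t.
    apply: contrapT => H; apply: Pnub; exists M => t Pt.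
    by rewrite leNgt; apply/negP => Mt; apply: H; exists t.
  case: Pt => e ep He.
  pose d := Num.min e (A / 2).
  have d0 : 0 < d by rewrite lt_min ep e0.
  have de : d <= e by rewrite ge_min lexx.
  have dA : d <= A / 2 by rewrite ge_min lexx orbT.
  have [t' ht'] := A_adh _ d0.
  have [t't|t't] := ltP t' t.
    by have := He _ t't; lra.
  by have := hM t' (ltW (lt_le_trans Mt t't)); rewrite ltr_norml => /andP[? ?]; lra.
have hasP : has_sup P by [].
pose s := sup P.
have [DsA|DsA] := eqVneq (D s) A; first by exists (BRight s).
have [hLA|hLA] := eqVneq (hL s) A; first by exists (BLeft s).
exfalso.
have D1 : D s < A by rewrite lt_neqAle DsA D_le_A.
have h1 : hL s < A by rewrite lt_neqAle hLA hL_le.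
pose d := Num.min (A - D s) (A - hL s) / 2.
have d0 : 0 < d by rewrite /d divr_gt0 // lt_min !subr_gt0 D1 h1.
have d1 : d <= (A - D s) / 2 by rewrite /d ler_pM2r // ge_min lexx.
have d2 : d <= (A - hL s) / 2 by rewrite /d ler_pM2r // ge_min lexx orbT.
have [e1 e1p H1] := Dright s _ d0.
have [e2 e2p H2] := Dleft s _ d0.
pose eta := Num.min e1 e2.
have eta0 : 0 < eta by rewrite lt_min e1p e2p.
have eta1 : eta <= e1 by rewrite ge_min lexx.
have eta2 : eta <= e2 by rewrite ge_min lexx orbT.
have eta20 : 0 < eta / 2 by lra.
have [p Pp hp] := sup_adherent eta20 hasP.
case: Pp => e ep He.
have : P (s + eta / 2).
  exists (Num.min e d); first by rewrite lt_min ep d0.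
  have m1 : Num.min e d <= e by rewrite ge_min lexx.
  have m2 : Num.min e d <= d by rewrite ge_min lexx orbT.
  move=> u us.
  have [up|pu] := ltP u p; first by have := He u up; lra.
  have [us'|su] := ltP u s.
    have := H2 u; rewrite ltr_norml => H; have /andP[? ?] : (- d < D u - hL s < d).
      by apply: H => //; rewrite /s; lra.
    lra.
  have := H1 u su; rewrite ltr_norml => H; have /andP[? ?] : (- d < D u - D s < d).
    by apply: H; lra.
  lra.
move=> /(sup_upper_bound hasP); rewrite -/s; lra.
Qed.

End pair.

Lemma itvD (R : realType) (b c : itv_bound R) :
  [set` Interval b c] = [set` Interval -oo%O c] `\` [set` Interval -oo%O b].
Proof.
apply/seteqP; split => x /=; rewrite !itv_boundlr /=.
- move=> /andP[h1 h2]; split => // h3.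
  by have := le_trans h3 h1; rewrite bnd_simp ltxx.
- case=> h2 /negP; rewrite -ltNge ltBRight_leBLeft => h1; exact/andP.
Qed.

Lemma fmuI (R : realType) (m : probability R R) (b c : itv_bound R) : (b <= c)%O ->
  fine (m [set` Interval b c]) =
  fine (m [set` Interval -oo%O c]) - fine (m [set` Interval -oo%O b]).
Proof.
move=> bc; rewrite itvD measureD //; last first.
  by rewrite (le_lt_trans (probability_le1 _ _)) ?ltry.
rewrite setIidr; last first.
  by move=> x /=; apply: subitvPr.
by apply: fineB; apply: fin_num_measure.
Qed.

Lemma I0_itv (R : realType) (i : interval R) : [set` i] !=set0 -> I0 [set` i].
Proof. by move=> ne; split => //; apply/connected_intervalP/interval_is_interval. Qed.

Section final.
Context {R : realType} (mu nu : probability R R).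
Let h (b : itv_bound R) := fine (mu [set` Interval -oo%O b]) - fine (nu [set` Interval -oo%O b]).

Lemma diffI b c : (b <= c)%O ->
  fine (mu [set` Interval b c]) - fine (nu [set` Interval b c]) = h c - h b.
Proof. by move=> bc; rewrite (fmuI _ mu _ _ bc) (fmuI _ nu _ _ bc) /h; lra. Qed.

Lemma exI b c : (b <= c)%O -> exists2 I, I0 I &
  `|fine (mu I) - fine (nu I)| = `|h c - h b|.
Proof.
move=> bc; have [ne|e] := pselect ([set` Interval b c] !=set0).
  by exists [set` Interval b c]; [exact: I0_itv | rewrite diffI].
have E : [set` Interval b c] = set0.
  by apply/seteqP; split => // x hx; apply: e; exists x.
have := diffI _ _ bc; rewrite E !fmu0 subrr => <-.
exists [set` `]-oo, +oo[]; first by apply: I0_itv; exists 0.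
by rewrite set_itvNyy !fmuT subrr.
Qed.

End final.

Theorem lemma2p1 (R : realType) (mu nu : probability R R) :
  (exists2 I : set R, I0 I & `|fine (mu I) - fine (nu I)| = kuiper_dist mu nu)
  /\ (forall I : set R, I0 I -> `|fine (mu I) - fine (nu I)| <= kuiper_dist mu nu).
Proof.
rewrite /kuiper_dist.
set A := sup (range (fun t => Defs.cdf mu t - Defs.cdf nu t)).
set B := sup (range (fun t => Defs.cdf nu t - Defs.cdf mu t)).
have hle b : fine (mu [set` Interval -oo%O b]) - fine (nu [set` Interval -oo%O b]) <= A.
  exact: hb_le.
have hge b : fine (nu [set` Interval -oo%O b]) - fine (mu [set` Interval -oo%O b]) <= B.
  exact: hb_le.
split.
  have [b1 hb1] := hb_attain _ mu nu.
  have [b2 hb2] := hb_attain _ nu mu.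
  rewrite -/A in hb1; rewrite -/B in hb2.
  have [b21|b12] := leP b2 b1.
    have [I I0I HI] := exI mu nu _ _ b21; exists I => //.
    have := hle b2; move=> ?; rewrite HI ger0_norm; lra.
  have [I I0I HI] := exI mu nu _ _ (ltW b12); exists I => //.
  have := hle b2; have := hge b1.
  move=> ? ?; rewrite HI ler0_norm; lra.
move=> I [ne /connected_intervalP /is_intervalP IE].
move: ne; rewrite IE.
case: (Rhull I) => a c ne.
have ac : (a <= c)%O.
  rewrite leNgt; apply/negP => ca.
  have nac : ~~ (a < c)%O by rewrite -leNgt ltW.
  by move: ne => [x /=]; rewrite (itv_ge nac).
rewrite diffI //.
have := hle a; have := hle c; have := hge a; have := hge c.
move=> ? ? ? ?; rewrite ler_norml; apply/andP; split; lra.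
Qed.
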